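(* Let $\mathbb{F}$ be an algebraically closed field with $\mathrm{char}\,\mathbb{F}=2$, and let $\mathcal{A}$ be a (not necessarily unital) subalgebra of $\mathbf{O}$ with $\mathcal{A}\subseteq\mathbf{O}_0$ and $\dim\mathcal{A}\ge3$. Then there exists $g\in{\rm G}_2$ such that either (a) $\{1_{\mathbf{O}},\mathbf{u}_1,\mathbf{v}_2\}\subseteq g\mathcal{A}$; or (b) $\{\mathbf{u}_1,\mathbf{v}_2,\mathbf{v}_3\}\subseteq g\mathcal{A}$ and $1_{\mathbf{O}}\notin g\mathcal{A}$.
   Context: The split octonion algebra $\mathbf{O}$ is the 8-dimensional $\mathbb{F}$-vector space of formal matrices $a=\begin{pmatrix}\alpha&\mathbf{u}\\ \mathbf{v}&\beta\end{pmatrix}$ with $\alpha,\beta\in\mathbb{F}$, $\mathbf{u},\mathbf{v}\in\mathbb{F}^3$, with multiplication $\begin{pmatrix}\alpha&\mathbf{u}\\ \mathbf{v}&\beta\end{pmatrix}\begin{pmatrix}\alpha'&\mathbf{u}'\\ \mathbf{v}'&\beta'\end{pmatrix}=\begin{pmatrix}\alpha\alpha'+\mathbf{u}\cdot\mathbf{v}'&\alpha\mathbf{u}'+\beta'\mathbf{u}-\mathbf{v}\times\mathbf{v}'\\ \alpha'\mathbf{v}+\beta\mathbf{v}'+\mathbf{u}\times\mathbf{u}'&\beta\beta'+\mathbf{v}\cdot\mathbf{u}'\end{pmatrix}$ (dot product and cross product on $\mathbb{F}^3$). Trace $\mathrm{tr}(a)=\alpha+\beta$, $\mathbf{O}_0=\{a\in\mathbf{O}\mid\mathrm{tr}(a)=0\}$.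 With $\mathbf{c}_1,\mathbf{c}_2,\mathbf{c}_3$ the standard basis of $\mathbb{F}^3$: $\mathbf{u}_i$ has $\mathbf{u}=\mathbf{c}_i$ and all else $0$, $\mathbf{v}_i$ has $\mathbf{v}=\mathbf{c}_i$ and all else $0$, and $1_{\mathbf{O}}$ has $\alpha=\beta=1$, $\mathbf{u}=\mathbf{v}=0$. ${\rm G}_2=\mathrm{Aut}(\mathbf{O})$. *)

(* Defs.v *)
From HB Require Import structures.
From mathcomp Require Import all_boot all_order all_algebra.
Set Implicit Arguments. Unset Strict Implicit. Unset Printing Implicit Defensive.
Import Order.TTheory GRing.Theory.
Local Open Scope ring_scope.

(* The split octonions O over a field F, realised as the 8-dimensional
   F-vector space 'rV[F]_8 of formal matrices  ( alpha  u ; v  beta ),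
   with coordinates: index 0 = alpha, 1..3 = u, 4..6 = v, 7 = beta. *)
Section Octonions.
Variable F : fieldType.

Definition Oct := 'rV[F]_8.

Definition oalpha (a : Oct) : F := a 0 (inord 0).
Definition obeta (a : Oct) : F := a 0 (inord 7).
Definition ou (a : Oct) : 'rV[F]_3 := \row_(i < 3) a 0 (inord (i + 1)).
Definition ov (a : Oct) : 'rV[F]_3 := \row_(i < 3) a 0 (inord (i + 4)).

Definition mkO (al : F) (u v : 'rV[F]_3) (be : F) : Oct :=
  \row_(j < 8)
    if (j == 0 :> nat) then al
    else if (j < 4)%N then u 0 (inord (j - 1))
    else if (j < 7)%N then v 0 (inord (j - 4))
    else be.

Definition dot3 (x y : 'rV[F]_3) : F := \sum_(i < 3) x 0 i * y 0 i.
Definition cross3 (x y : 'rV[F]_3) : 'rV[F]_3 :=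
  \row_(i < 3)
    (x 0 (inord ((i + 1) %% 3)) * y 0 (inord ((i + 2) %% 3))
     - x 0 (inord ((i + 2) %% 3)) * y 0 (inord ((i + 1) %% 3))).

Definition omul (a b : Oct) : Oct :=
  mkO (oalpha a * oalpha b + dot3 (ou a) (ov b))
      (oalpha a *: ou b + obeta b *: ou a - cross3 (ov a) (ov b))
      (oalpha b *: ov a + obeta a *: ov b + cross3 (ou a) (ou b))
      (obeta a * obeta b + dot3 (ov a) (ou b)).

Definition otr (a : Oct) : F := oalpha a + obeta a.

Definition cvec (i : 'I_3) : 'rV[F]_3 := \row_(j < 3) (j == i)%:R.

Definition oone : Oct := mkO 1 0 0 1.
Definition ouvec (i : 'I_3) : Oct := mkO 0 (cvec i) 0 0.
Definition ovvec (i : 'I_3) : Oct := mkO 0 0 (cvec i) 0.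

Definition is_subalgebra (A : {vspace Oct}) : Prop :=
  forall x y, x \in A -> y \in A -> omul x y \in A.

Definition isG2 (g : Oct -> Oct) : Prop :=
  [/\ forall (c : F) (x y : Oct), g (c *: x + y) = c *: g x + g y,
      bijective g &
      forall x y, g (omul x y) = omul (g x) (g y)].

Definition in_image (g : Oct -> Oct) (A : {vspace Oct}) (x : Oct) : Prop :=
  exists2 a, a \in A & x = g a.

End Octonions.

(* Main.v *)
Require Import Defs.
From HB Require Import structures.
From mathcomp Require Import all_boot all_order all_algebra.
From mathcomp Require Import ring.
Set Implicit Arguments. Unset Strict Implicit. Unset Printing Implicit Defensive.
Import Order.TTheory GRing.Theory.
Local Open Scope ring_scope.


Section Infra.
Variable F : fieldType.
Local Notation Oct := (Oct F).

Definition cf (p : Oct) (k : nat) : F := p 0 (inord k).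
Definition mk8 (a0 a1 a2 a3 a4 a5 a6 a7 : F) : Oct :=
  \row_(j < 8) nth 0 [:: a0; a1; a2; a3; a4; a5; a6; a7] j.

Lemma cf_mk8 a0 a1 a2 a3 a4 a5 a6 a7 k : (k < 8)%N ->
  cf (mk8 a0 a1 a2 a3 a4 a5 a6 a7) k = nth 0 [:: a0; a1; a2; a3; a4; a5; a6; a7] k.
Proof. by move=> hk; rewrite /cf /mk8 mxE inordK. Qed.

Lemma oct_eta (p : Oct) : p = mk8 (cf p 0) (cf p 1) (cf p 2) (cf p 3) (cf p 4) (cf p 5) (cf p 6) (cf p 7).
Proof.
apply/rowP => j; rewrite /mk8 mxE /cf.
case: j => [m hm] /=.
do 8 (case: m hm => [|m] hm; first by congr (p _ _); apply: val_inj; rewrite /= inordK).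
by [].
Qed.

Lemma omulE (a b : Oct) : omul a b =
  mk8 (cf a 0 * cf b 0 + (cf a 1 * cf b 4 + cf a 2 * cf b 5 + cf a 3 * cf b 6))
      (cf a 0 * cf b 1 + cf b 7 * cf a 1 - (cf a 5 * cf b 6 - cf a 6 * cf b 5))
      (cf a 0 * cf b 2 + cf b 7 * cf a 2 - (cf a 6 * cf b 4 - cf a 4 * cf b 6))
      (cf a 0 * cf b 3 + cf b 7 * cf a 3 - (cf a 4 * cf b 5 - cf a 5 * cf b 4))
      (cf b 0 * cf a 4 + cf a 7 * cf b 4 + (cf a 2 * cf b 3 - cf a 3 * cf b 2))
      (cf b 0 * cf a 5 + cf a 7 * cf b 5 + (cf a 3 * cf b 1 - cf a 1 * cf b 3))
      (cf b 0 * cf a 6 + cf a 7 * cf b 6 + (cf a 1 * cf b 2 - cf a 2 * cf b 1))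
      (cf a 7 * cf b 7 + (cf a 4 * cf b 1 + cf a 5 * cf b 2 + cf a 6 * cf b 3)).
Proof.
rewrite /omul /mkO /mk8 /oalpha /obeta /dot3 /cf; apply/rowP => j; rewrite !mxE.
case: j => [m hm] /=.
case: m hm => [|[|[|[|[|[|[|[|m]]]]]]]] hm //=.
all: rewrite ?mxE ?big_ord_recr ?big_ord0 /= ?mxE.
all: rewrite ?inordK //=; rewrite ?inordK //=; rewrite ?inordK //=.
all: by rewrite add0r.
Qed.

Lemma mk8_eq a0 a1 a2 a3 a4 a5 a6 a7 b0 b1 b2 b3 b4 b5 b6 b7 :
  a0 = b0 -> a1 = b1 -> a2 = b2 -> a3 = b3 -> a4 = b4 -> a5 = b5 -> a6 = b6 -> a7 = b7 ->
  mk8 a0 a1 a2 a3 a4 a5 a6 a7 = mk8 b0 b1 b2 b3 b4 b5 b6 b7.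
Proof. by move=> -> -> -> -> -> -> -> ->. Qed.

Lemma mk8_inj a0 a1 a2 a3 a4 a5 a6 a7 b0 b1 b2 b3 b4 b5 b6 b7 :
  mk8 a0 a1 a2 a3 a4 a5 a6 a7 = mk8 b0 b1 b2 b3 b4 b5 b6 b7 ->
  a0 = b0 /\ a1 = b1 /\ a2 = b2 /\ a3 = b3 /\ a4 = b4 /\ a5 = b5 /\ a6 = b6 /\ a7 = b7.
Proof.
move=> e.
have h k : (k < 8)%N -> cf (mk8 a0 a1 a2 a3 a4 a5 a6 a7) k = cf (mk8 b0 b1 b2 b3 b4 b5 b6 b7) k by rewrite e.
have := h 0%N isT; have := h 1%N isT; have := h 2%N isT; have := h 3%N isT.
have := h 4%N isT; have := h 5%N isT; have := h 6%N isT; have := h 7%N isT.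
by rewrite !cf_mk8 //= => *.
Qed.

Lemma cfD c (x y : Oct) k : cf (c *: x + y) k = c * cf x k + cf y k.
Proof. by rewrite /cf !mxE. Qed.

Lemma mk8_lin c a0 a1 a2 a3 a4 a5 a6 a7 b0 b1 b2 b3 b4 b5 b6 b7 :
  c *: mk8 a0 a1 a2 a3 a4 a5 a6 a7 + mk8 b0 b1 b2 b3 b4 b5 b6 b7 =
  mk8 (c * a0 + b0) (c * a1 + b1) (c * a2 + b2) (c * a3 + b3) (c * a4 + b4) (c * a5 + b5) (c * a6 + b6) (c * a7 + b7).
Proof.
rewrite [LHS]oct_eta !cfD !cf_mk8 //.
Qed.

Lemma otrE (p : Oct) : otr p = cf p 0 + cf p 7.
Proof. by []. Qed.

Lemma ooneE : oone F = mk8 1 0 0 0 0 0 0 1.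
Proof.
rewrite [LHS]oct_eta /oone /mkO /cf /cvec; apply: mk8_eq; rewrite !mxE !inordK //= ?mxE //.
Qed.

Lemma ouvec0E : ouvec F 0 = mk8 0 1 0 0 0 0 0 0.
Proof. rewrite [LHS]oct_eta /ouvec /mkO /cf /cvec; apply: mk8_eq; rewrite !mxE !inordK //= ?mxE ?inordK //.
all: by rewrite -val_eqE /= inordK.
Qed.
Lemma ovvec1E : ovvec F 1 = mk8 0 0 0 0 0 1 0 0.
Proof. rewrite [LHS]oct_eta /ovvec /mkO /cf /cvec; apply: mk8_eq; rewrite !mxE !inordK //= ?mxE ?inordK //.
all: by rewrite -val_eqE /= inordK.
Qed.
Lemma ovvec2E : ovvec F 2 = mk8 0 0 0 0 0 0 1 0.
Proof. rewrite [LHS]oct_eta /ovvec /mkO /cf /cvec; apply: mk8_eq; rewrite !mxE !inordK //= ?mxE ?inordK //.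
all: by rewrite -val_eqE /= inordK.
Qed.

Definition good (g : Oct -> Oct) :=
  isG2 g /\ (forall x, otr (g x) = otr x) /\ g (oone F) = oone F.

Lemma good_mk (g h : Oct -> Oct) :
  (forall c x y, g (c *: x + y) = c *: g x + g y) -> cancel g h -> cancel h g ->
  (forall x y, g (omul x y) = omul (g x) (g y)) ->
  (forall x, otr (g x) = otr x) -> g (oone F) = oone F -> good g.
Proof. by move=> hl c1 c2 hm ht h1; rewrite /good /isG2; split=> //; split=> //; exists h. Qed.

Lemma good_comp g h : good g -> good h -> good (g \o h).
Proof.
rewrite /good /isG2.
move=> [[lg [g' c1 c2] mg] [tg og]] [[lh [h' d1 d2] mh] [th oh]].
split; [split|split].
- by move=> c x y /=; rewrite lh lg.
- exists (h' \o g') => x /=; first by rewrite c1 d1.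
  by rewrite d2 c2.
- by move=> x y /=; rewrite mh mg.
- by move=> x /=; rewrite tg th.
- by rewrite /= oh og.
Qed.

Lemma good_id : good id.
Proof. rewrite /good /isG2; by split; [split=> //; exists id|]. Qed.

Ltac goodtac g ginv :=
  apply: (@good_mk g ginv);
  [ move=> c x y; rewrite /g !cfD mk8_lin; apply: mk8_eq; ring
  | move=> x; rewrite /g /ginv !cf_mk8 //= [RHS]oct_eta; apply: mk8_eq; ring
  | move=> x; rewrite /g /ginv !cf_mk8 //= [RHS]oct_eta; apply: mk8_eq; ring
  | move=> x y; rewrite /g !omulE !cf_mk8 //=; apply: mk8_eq; ring
  | move=> x; rewrite /g !otrE !cf_mk8 //=; ring
  | rewrite /g ooneE !cf_mk8 //=; apply: mk8_eq; ring ].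

Definition sig (p : Oct) := mk8 (cf p 7) (- cf p 4) (- cf p 5) (- cf p 6) (- cf p 1) (- cf p 2) (- cf p 3) (cf p 0).
Lemma good_sig : good sig.
Proof. goodtac sig sig. Qed.

Definition X1 t (p : Oct) := mk8 (cf p 0 - t * cf p 1) (cf p 1) (cf p 2 - t * cf p 6) (cf p 3 + t * cf p 5)
  (cf p 4 + t * (cf p 0 - cf p 7) - t ^+ 2 * cf p 1) (cf p 5) (cf p 6) (cf p 7 + t * cf p 1).
Lemma good_X1 t : good (X1 t).
Proof. goodtac (X1 t) (X1 (- t)). Qed.

Definition P12 (p : Oct) := mk8 (cf p 0) (cf p 2) (- cf p 1) (cf p 3) (cf p 5) (- cf p 4) (cf p 6) (cf p 7).

Definition P12i (p : Oct) := mk8 (cf p 0) (- cf p 2) (cf p 1) (cf p 3) (- cf p 5) (cf p 4) (cf p 6) (cf p 7).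

Definition P13 (p : Oct) := mk8 (cf p 0) (cf p 3) (cf p 2) (- cf p 1) (cf p 6) (cf p 5) (- cf p 4) (cf p 7).

Definition P13i (p : Oct) := mk8 (cf p 0) (- cf p 3) (cf p 2) (cf p 1) (- cf p 6) (cf p 5) (cf p 4) (cf p 7).

Definition P23 (p : Oct) := mk8 (cf p 0) (cf p 1) (cf p 3) (- cf p 2) (cf p 4) (cf p 6) (- cf p 5) (cf p 7).

Definition P23i (p : Oct) := mk8 (cf p 0) (cf p 1) (- cf p 3) (cf p 2) (cf p 4) (- cf p 6) (cf p 5) (cf p 7).

Definition R2 s (p : Oct) := mk8 (cf p 0) (cf p 1) (cf p 2 + s * cf p 1) (cf p 3) (cf p 4 - s * cf p 5) (cf p 5) (cf p 6) (cf p 7).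
Lemma good_R2 s : good (R2 s).
Proof. goodtac (R2 s) (R2 (- s)). Qed.

Definition R3 s (p : Oct) := mk8 (cf p 0) (cf p 1) (cf p 2) (cf p 3 + s * cf p 1) (cf p 4 - s * cf p 6) (cf p 5) (cf p 6) (cf p 7).
Lemma good_R3 s : good (R3 s).
Proof. goodtac (R3 s) (R3 (- s)). Qed.

Definition Tm s (p : Oct) := mk8 (cf p 0) (cf p 1) (cf p 2 - s * cf p 3) (cf p 3) (cf p 4) (cf p 5) (cf p 6 + s * cf p 5) (cf p 7).
Lemma good_Tm s : good (Tm s).
Proof. goodtac (Tm s) (Tm (- s)). Qed.

Definition Y2 t (p : Oct) := mk8 (cf p 0 - t * cf p 5) (cf p 1) (cf p 2 + t * (cf p 0 - cf p 7) - t ^+ 2 * cf p 5) (cf p 3) (cf p 4 + t * cf p 3) (cf p 5) (cf p 6 - t * cf p 1) (cf p 7 + t * cf p 5).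
Lemma good_Y2 t : good (Y2 t).
Proof. goodtac (Y2 t) (Y2 (- t)). Qed.

Definition Y3 t (p : Oct) := mk8 (cf p 0 - t * cf p 6) (cf p 1) (cf p 2) (cf p 3 + t * (cf p 0 - cf p 7) - t ^+ 2 * cf p 6) (cf p 4 - t * cf p 2) (cf p 5 + t * cf p 1) (cf p 6) (cf p 7 + t * cf p 6).
Lemma good_Y3 t : good (Y3 t).
Proof. goodtac (Y3 t) (Y3 (- t)). Qed.

Definition tau (p : Oct) := mk8 (cf p 7) (- cf p 5) (cf p 4) (- cf p 6) (- cf p 2) (cf p 1) (- cf p 3) (cf p 0).

Definition taui (p : Oct) := mk8 (cf p 7) (cf p 5) (- cf p 4) (- cf p 6) (cf p 2) (- cf p 1) (- cf p 3) (cf p 0).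

Lemma good_P12 : good P12.
Proof. goodtac P12 P12i. Qed.

Lemma good_P12i : good P12i.
Proof. goodtac P12i P12. Qed.

Lemma good_P13 : good P13.
Proof. goodtac P13 P13i. Qed.

Lemma good_P13i : good P13i.
Proof. goodtac P13i P13. Qed.

Lemma good_P23 : good P23.
Proof. goodtac P23 P23i. Qed.

Lemma good_P23i : good P23i.
Proof. goodtac P23i P23. Qed.

Lemma good_tau : good tau.
Proof. goodtac tau taui. Qed.

Lemma good_taui : good taui.
Proof. goodtac taui tau. Qed.

End Infra.


Section Pred.
Variable F : fieldType.
Local Notation Oct := (Oct F).

Definition img (g : Oct -> Oct) (B : Oct -> Prop) x := exists2 y, B y & x = g y.

Definition Alg (B : Oct -> Prop) :=
  [/\ forall c x y, B x -> B y -> B (c *: x + y),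
      forall x y, B x -> B y -> B (omul x y),
      forall x, B x -> otr x = 0 &
      forall p1 p2, exists2 q, B q & forall a b, q <> a *: p1 + b *: p2].

Lemma Alg0 (B : Oct -> Prop) : Alg B -> B 0.
Proof.
case=> hl _ _ hd; have [q hq _] := hd 0 0.
by have := hl (-1) q q hq hq; rewrite scaleN1r addNr.
Qed.

Lemma AlgZ (B : Oct -> Prop) c x : Alg B -> B x -> B (c *: x).
Proof. move=> hA hx; case: (hA) => hl _ _ _; by have := hl c x 0 hx (Alg0 hA); rewrite addr0. Qed.

Lemma AlgD (B : Oct -> Prop) x y : Alg B -> B x -> B y -> B (x + y).
Proof. move=> hA hx hy; case: (hA) => hl _ _ _; by have := hl 1 x y hx hy; rewrite scale1r. Qed.

Lemma good_lin (g : Oct -> Oct) c x y : good g -> g (c *: x + y) = c *: g x + g y.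
Proof. by case=> [[hl _ _] _]. Qed.

Lemma good0 (g : Oct -> Oct) : good g -> g 0 = 0.
Proof.
move=> hg; have := good_lin 1 0 0 hg; rewrite !scale1r !addr0 => e.
by apply: (addrI (g 0)); rewrite -e addr0.
Qed.

Lemma goodZ (g : Oct -> Oct) c x : good g -> g (c *: x) = c *: g x.
Proof. by move=> hg; have := good_lin c x 0 hg; rewrite (good0 hg) !addr0. Qed.

Lemma good_inv (g : Oct -> Oct) : good g -> exists h, [/\ cancel g h, cancel h g &
   forall c x y, h (c *: x + y) = c *: h x + h y].
Proof.
move=> hg; case: (hg) => [[hl [h c1 c2] hm] _]; exists h; split=> // c x y.
by apply: (can_inj c1); rewrite hl !c2.
Qed.

Lemma Alg_img (g : Oct -> Oct) B : good g -> Alg B -> Alg (img g B).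
Proof.
move=> hg hA; case: (hA) => hl hm ht hd; case: (hg) => [[gl _ gm] [gt g1]].
split.
- move=> c _ _ [x hx ->] [y hy ->]; exists (c *: x + y); [exact: hl|by rewrite gl].
- move=> _ _ [x hx ->] [y hy ->]; exists (omul x y); [exact: hm|by rewrite gm].
- by move=> _ [x hx ->]; rewrite gt ht.
- move=> p1 p2; have [h [c1 c2 hh]] := good_inv hg.
  have [q hq hn] := hd (h p1) (h p2).
  exists (g q); first by exists q.
  move=> a b e; apply: (hn a b).
  have h0 : h 0 = 0 by rewrite -{1}(good0 hg) c1.
  have hZ c x : h (c *: x) = c *: h x by rewrite -[c *: x]addr0 hh h0 addr0.
  by rewrite -[q]c1 e hh hZ.
Qed.

Lemma img_comp (g h : Oct -> Oct) B x : img g (img h B) x <-> img (g \o h) B x.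
Proof.
split; first by case=> _ [y hy ->] ->; exists y.
by case=> y hy ->; exists (h y) => //; exists y.
Qed.

Lemma img_one (g : Oct -> Oct) B : good g -> (img g B (oone F) <-> B (oone F)).
Proof.
move=> hg; case: (hg) => [[_ [h c1 c2] _] [_ g1]]; split.
- by case=> y hy e; have := c1 y; rewrite -e -{1}g1 c1 => ->.
- by move=> h1; exists (oone F).
Qed.

Lemma img_scale (g : Oct -> Oct) B p q (l : F) : good g -> Alg B -> B p -> g p = l *: q -> l != 0 -> img g B q.
Proof.
move=> hg hA hp e hl; exists (l^-1 *: p); first exact: AlgZ.
by rewrite goodZ // e scalerA mulVf // scale1r.
Qed.

Lemma img_pre (g : Oct -> Oct) B p q : B p -> g p = q -> img g B q.
Proof. by move=> hp <-; exists p. Qed.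

End Pred.


Section Stage.
Variable F : fieldType.
Local Notation Oct := (Oct F).
Local Notation mk8 := (@mk8 F).

Lemma cfZ c (x : Oct) k : cf (c *: x) k = c * cf x k.
Proof. by rewrite /cf !mxE. Qed.

Lemma mk8_scale c a0 a1 a2 a3 a4 a5 a6 a7 :
  c *: mk8 a0 a1 a2 a3 a4 a5 a6 a7 = mk8 (c * a0) (c * a1) (c * a2) (c * a3) (c * a4) (c * a5) (c * a6) (c * a7).
Proof. by rewrite [LHS]oct_eta !cfZ !cf_mk8. Qed.

Lemma cfDD (x y : Oct) k : cf (x + y) k = cf x k + cf y k.
Proof. by rewrite /cf !mxE. Qed.

Ltac fnz := repeat (apply/andP; split); rewrite ?mulf_neq0 ?oppr_eq0 //.
Ltac fsolve := field; fnz.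

Definition u1v := mk8 0 1 0 0 0 0 0 0.
Definition v2v := mk8 0 0 0 0 0 1 0 0.
Definition v3v := mk8 0 0 0 0 0 0 1 0.

Lemma L1a (u1 v2 v3 : F) : u1 != 0 ->
  exists2 g : Oct -> Oct, good g & exists2 l, l != 0 & g (mk8 0 u1 0 0 0 v2 v3 0) = l *: u1v.
Proof.
move=> hu; case: (eqVneq v2 0) => [->|hv2].
- exists (Y2 (v3 / u1)); first exact: good_Y2.
  exists u1 => //; rewrite /Y2 /u1v !cf_mk8 //= mk8_scale; by apply: mk8_eq; fsolve.
- pose g1 := Y3 (- v2 / u1). pose g2 := Tm (- v3 / v2).
  have hg : good (g1 \o g2) by apply: good_comp; [exact: good_Y3|exact: good_Tm].
  exists (g1 \o g2) => //.
  exists u1 => //; rewrite /= /g1 /g2 /Y3 /Tm /u1v !cf_mk8 //= mk8_scale; by apply: mk8_eq; fsolve.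
Qed.

Definition nul (p : Oct) := omul p p = 0 /\ otr p = 0.

Lemma cf0 k : cf (0 : Oct) k = 0.
Proof. by rewrite /cf mxE. Qed.

Lemma nul_coord (p : Oct) : nul p ->
  cf p 0 * cf p 0 + (cf p 1 * cf p 4 + cf p 2 * cf p 5 + cf p 3 * cf p 6) = 0 /\ cf p 7 = - cf p 0.
Proof.
case=> e t; split; first by have := congr1 (fun x : Oct => cf x 0) e; rewrite omulE cf_mk8 // cf0.
by apply/eqP; rewrite -addr_eq0 addrC -otrE t.
Qed.

Lemma nul_good (g : Oct -> Oct) p : good g -> nul p -> nul (g p).
Proof.
move=> hg [e t]; case: (hg) => [[_ _ gm] [gt _]]; split; last by rewrite gt.
by rewrite -gm e good0.
Qed.

Lemma L1c (p : Oct) : nul p -> cf p 1 != 0 ->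
  exists2 g : Oct -> Oct, good g & exists2 l, l != 0 & g p = l *: u1v.
Proof.
move=> hp h1; have [hn e7] := nul_coord hp.
set t := cf p 0 / cf p 1.
set s := - (cf p 2 - t * cf p 6) / cf p 1.
set s' := - (cf p 3 + t * cf p 5) / cf p 1.
have e : (R3 s' \o R2 s \o X1 t) p = mk8 0 (cf p 1) 0 0 0 (cf p 5) (cf p 6) 0.
  rewrite /= /R3 /R2 /X1 !cf_mk8 //= e7 /s' /s /t; apply: mk8_eq; try by fsolve.
  have -> : (0:F) = (cf p 0 * cf p 0 + (cf p 1 * cf p 4 + cf p 2 * cf p 5 + cf p 3 * cf p 6)) / cf p 1 by rewrite hn mul0r.
  fsolve.
have [g hg [l hl el]] := L1a (cf p 5) (cf p 6) h1.
exists (g \o (R3 s' \o R2 s \o X1 t)).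
  by apply: good_comp => //; apply: good_comp; [apply: good_comp; [exact: good_R3|exact: good_R2]|exact: good_X1].
by exists l => //; rewrite /= -el -e.
Qed.

Lemma comp_ex (g0 : Oct -> Oct) p : good g0 ->
  (exists2 g : Oct -> Oct, good g & exists2 l, l != 0 & g (g0 p) = l *: u1v) ->
  exists2 g : Oct -> Oct, good g & exists2 l, l != 0 & g p = l *: u1v.
Proof.
move=> h0 [g hg [l hl e]]; exists (g \o g0); first exact: good_comp.
by exists l.
Qed.

Lemma L1d (p : Oct) : nul p -> cf p 1 != 0 \/ cf p 2 != 0 \/ cf p 3 != 0 ->
  exists2 g : Oct -> Oct, good g & exists2 l, l != 0 & g p = l *: u1v.
Proof.
move=> hp [h|[h|h]]; first exact: L1c.
- apply: (comp_ex (@good_P12 F)); apply: L1c; first exact: nul_good (@good_P12 F) hp.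
  by rewrite /P12 cf_mk8.
- apply: (comp_ex (@good_P13 F)); apply: L1c; first exact: nul_good (@good_P13 F) hp.
  by rewrite /P13 cf_mk8.
Qed.

Lemma L1 (p : Oct) : p != 0 -> nul p ->
  exists2 g : Oct -> Oct, good g & exists2 l, l != 0 & g p = l *: u1v.
Proof.
move=> hp0 hp.
case: (eqVneq (cf p 1) 0) => h1; last by apply: (L1d hp); left.
case: (eqVneq (cf p 2) 0) => h2; last by apply: (L1d hp); right; left.
case: (eqVneq (cf p 3) 0) => h3; last by apply: (L1d hp); right; right.
have [hn e7] := nul_coord hp.
move: hn; rewrite h1 h2 h3 !mul0r !addr0 => /eqP; rewrite mulf_eq0 orbb => /eqP h0.
apply: (comp_ex (@good_sig F)); apply: L1d; first exact: nul_good (@good_sig F) hp.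
rewrite /sig !cf_mk8 // /= !oppr_eq0.
case: (eqVneq (cf p 4) 0) => h4; last by left.
case: (eqVneq (cf p 5) 0) => h5; last by right; left.
case: (eqVneq (cf p 6) 0) => h6; last by right; right.
move: hp0; rewrite (oct_eta p) e7 h0 h1 h2 h3 h4 h5 h6 oppr0.
have -> : mk8 0 0 0 0 0 0 0 0 = 0 by rewrite [RHS]oct_eta !cf0.
by rewrite eqxx.
Qed.


Ltac oeq := rewrite /u1v /v2v /v3v ?ooneE [LHS]oct_eta [RHS]oct_eta; apply: mk8_eq;
  rewrite ?omulE ?cfDD ?cfZ ?cf_mk8 //=.

Lemma trace_fact (B : Oct -> Prop) x : Alg B -> B x -> otr x = 0.
Proof. by case=> _ _ ht _; apply: ht. Qed.

Lemma mul_in (B : Oct -> Prop) x y : Alg B -> B x -> B y -> B (omul x y).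
Proof. by case=> _ hm _ _; apply: (hm). Qed.

Lemma lin_in (B : Oct -> Prop) c x y : Alg B -> B x -> B y -> B (c *: x + y).
Proof. by case=> hl _ _ _; apply: (hl). Qed.

Lemma L2w (B : Oct -> Prop) a b : Alg B -> B u1v -> B (mk8 0 0 0 0 0 a b 0) -> a != 0 \/ b != 0 ->
  exists2 g : Oct -> Oct, good g & img g B u1v /\ img g B v2v.
Proof.
move=> hA hu hw hab; have [ha|ha] := eqVneq a 0.
- rewrite ha in hw hab.
  have hb : b != 0 by case: hab => //; rewrite eqxx.
  exists (@P23 F); first exact: good_P23.
  split; first by apply: (img_pre hu); rewrite /P23 /u1v !cf_mk8 //=; apply: mk8_eq; ring.
  apply: (img_scale (good_P23 _) hA hw _ hb).
  by rewrite /P23 /v2v mk8_scale !cf_mk8 //=; apply: mk8_eq; ring.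
- exists (Tm (- b / a)); first exact: good_Tm.
  split; first by apply: (img_pre hu); rewrite /Tm /u1v !cf_mk8 //=; apply: mk8_eq; ring.
  apply: (img_scale (good_Tm _) hA hw _ ha).
  by rewrite /Tm /v2v mk8_scale !cf_mk8 //=; apply: mk8_eq; fsolve.
Qed.

Lemma opp2 (h2 : 2 = 0 :> F) (x : F) : - x = x.
Proof. by apply/eqP; rewrite eq_sym -addr_eq0 -mulr2n -mulr_natr h2 mulr0. Qed.

Lemma L2 (h2 : 2 = 0 :> F) (B : Oct -> Prop) : Alg B -> B u1v ->
  exists2 g : Oct -> Oct, good g & img g B u1v /\ img g B v2v.
Proof.
move=> hA hu; case: (hA) => hl hm ht hd.
have [q hq hn] := hd (oone F) u1v.
have e7 : cf q 7 = - cf q 0.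
  by apply/eqP; rewrite -addr_eq0 addrC -otrE ht.
have y1 : cf q 4 = 0.
  have := ht _ (hm _ _ hu hq); rewrite otrE omulE /u1v !cf_mk8 //= => h.
  by apply: (etrans _ h); ring.
case: (eqVneq (cf q 2) 0) => hx2; case: (eqVneq (cf q 3) 0) => hx3.
- have hg : B ((cf q 0) *: oone F).
    case: (eqVneq (cf q 0) 0) => [->|hg0]; first by rewrite scale0r; exact: Alg0.
    have e : omul q q = (cf q 0 ^+ 2) *: oone F.
      rewrite ooneE mk8_scale omulE hx2 hx3 y1 e7; apply: mk8_eq; ring.
    apply: AlgZ => //.
    have -> : oone F = (cf q 0 ^+ 2)^-1 *: omul q q by rewrite e scalerA mulVf ?scale1r // expf_neq0.
    by apply: AlgZ => //; apply: (hm).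
  have hw : B (mk8 0 0 0 0 0 (cf q 5) (cf q 6) 0).
    have -> : mk8 0 0 0 0 0 (cf q 5) (cf q 6) 0 = (- cf q 1) *: u1v + ((-1) *: (cf q 0 *: oone F) + q).
      by oeq; rewrite ?hx2 ?hx3 ?y1 ?e7; rewrite ?(opp2 h2); ring: h2.
    by apply: (hl) => //; apply: (hl).
  apply: (L2w hA hu hw).
  case: (eqVneq (cf q 5) 0) => h5; last by left.
  case: (eqVneq (cf q 6) 0) => h6; last by right.
  exfalso; apply: (hn (cf q 0) (cf q 1)).
  by oeq; rewrite ?hx2 ?hx3 ?y1 ?e7 ?h5 ?h6; rewrite ?(opp2 h2); ring: h2.
all: have hw : B (mk8 0 0 0 0 0 (- cf q 3) (cf q 2) 0);
  [ have -> : mk8 0 0 0 0 0 (- cf q 3) (cf q 2) 0 = (- cf q 7) *: u1v + omul u1v q;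
    [ by oeq; rewrite ?y1; ring
    | by apply: (hl) => //; apply: (hm) ]
  | apply: (L2w hA hu hw) ].
- by left; rewrite oppr_eq0.
- by right.
- by left; rewrite oppr_eq0.
Qed.

Lemma L3 (B : Oct -> Prop) : Alg B -> B u1v -> B v2v -> ~ B (oone F) ->
  exists2 g : Oct -> Oct, good g & [/\ img g B u1v, img g B v2v & img g B v3v].
Proof.
move=> hA hu hv h1; case: (hA) => hl hm ht hd.
have [q hq hn] := hd u1v v2v.
have e7 : cf q 7 = - cf q 0.
  by apply/eqP; rewrite -addr_eq0 addrC -otrE ht.
have y1 : cf q 4 = 0.
  have := ht _ (hm _ _ hu hq); rewrite otrE omulE /u1v !cf_mk8 //= => h.
  by apply: (etrans _ h); ring.
have x2 : cf q 2 = 0.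
  have := ht _ (hm _ _ hv hq); rewrite otrE omulE /v2v !cf_mk8 //= => h.
  by apply: (etrans _ h); ring.
have hr : B (mk8 (cf q 0) 0 0 (cf q 3) 0 0 (cf q 6) (- (cf q 0))).
  have -> : mk8 (cf q 0) 0 0 (cf q 3) 0 0 (cf q 6) (- (cf q 0)) = (- cf q 1) *: u1v + ((- cf q 5) *: v2v + q).
    by oeq; rewrite ?x2 ?y1 ?e7; ring.
  by apply: (hl) => //; apply: (hl).
have hz : (cf q 0) * (cf q 0) + (cf q 3) * (cf q 6) = 0.
  apply/eqP; apply: contraT => hnz; exfalso; apply: h1.
  have e : omul (mk8 (cf q 0) 0 0 (cf q 3) 0 0 (cf q 6) (- (cf q 0))) (mk8 (cf q 0) 0 0 (cf q 3) 0 0 (cf q 6) (- (cf q 0))) = ((cf q 0) * (cf q 0) + (cf q 3) * (cf q 6)) *: oone F.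
    rewrite ooneE mk8_scale omulE !cf_mk8 //=; apply: mk8_eq; ring.
  have -> : oone F = ((cf q 0) * (cf q 0) + (cf q 3) * (cf q 6))^-1 *: omul (mk8 (cf q 0) 0 0 (cf q 3) 0 0 (cf q 6) (- (cf q 0))) (mk8 (cf q 0) 0 0 (cf q 3) 0 0 (cf q 6) (- (cf q 0))).
    by rewrite e scalerA mulVf ?scale1r.
  by apply: AlgZ => //; apply: (hm).
case: (eqVneq (cf q 6) 0) => hy3.
- have hg0 : (cf q 0) = 0.
    have : cf q 0 * cf q 0 = 0 by rewrite -hz hy3 mulr0 addr0.
    by move/eqP; rewrite mulf_eq0 orbb => /eqP.
  have hx3 : (cf q 3) != 0.
    apply/eqP => hx; apply: (hn (cf q 1) (cf q 5)).
    by oeq; rewrite ?x2 ?y1 ?e7 ?hx ?hy3 ?hg0; ring.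
  exists (@tau F); first exact: good_tau.
  split.
  + apply: (img_pre (p := (-1) *: v2v)); first exact: AlgZ.
    by rewrite /tau /u1v /v2v mk8_scale !cf_mk8 //=; apply: mk8_eq; ring.
  + by apply: (img_pre hu); rewrite /tau /u1v /v2v !cf_mk8 //=; apply: mk8_eq; ring.
  + apply: (img_scale (good_tau _) hA hr (l := - (cf q 3))); last by rewrite oppr_eq0.
    by rewrite /tau /v3v mk8_scale !cf_mk8 //= hg0 hy3; apply: mk8_eq; ring.
- exists (Y3 ((cf q 0) / (cf q 6))); first exact: good_Y3.
  split.
  + apply: (img_pre (p := u1v + (- ((cf q 0) / (cf q 6))) *: v2v)).
      by rewrite addrC; apply: (hl).
    by rewrite /u1v /v2v addrC mk8_lin /Y3 !cf_mk8 //=; apply: mk8_eq; ring.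
  + by apply: (img_pre hv); rewrite /Y3 /v2v !cf_mk8 //=; apply: mk8_eq; ring.
  + apply: (img_scale (good_Y3 _) hA hr (l := (cf q 6))) => //.
    rewrite /Y3 /v3v mk8_scale !cf_mk8 //=; apply: mk8_eq; try by fsolve.
    have -> : (0:F) = ((cf q 0) * (cf q 0) + (cf q 3) * (cf q 6)) / (cf q 6 * cf q 6) by rewrite hz mul0r.
    fsolve.
Qed.
End Stage.


Ltac oeq2 := rewrite /u1v /v2v /v3v ?ooneE [LHS]oct_eta [RHS]oct_eta; apply: mk8_eq;
  rewrite ?omulE ?cfDD ?cfZ ?cf_mk8 //=.

Lemma Alg_vspace (F : fieldType) (A : {vspace Oct F}) :
  is_subalgebra A -> (forall a, a \in A -> otr a = 0) -> (3 <= \dim A)%N ->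
  Alg (fun x => x \in A).
Proof.
move=> hsub htr hdim; split.
- by move=> c x y hx hy; rewrite memvD ?memvZ.
- exact: hsub.
- exact: htr.
- move=> p1 p2; set S := <<[:: p1; p2]>>%VS.
  have nsub : ~~ (A <= S)%VS.
    apply/negP => /dimvS h; have := leq_trans hdim (leq_trans h (dim_span _)).
    by [].
  have /allPn [x hx hxS] : ~~ all (fun x => x \in S) (vbasis A).
    apply/negP => /allP hall; move/negP: nsub; apply.
    by rewrite -(span_basis (vbasisP A)); apply/span_subvP => x /hall.
  exists x; first exact: vbasis_mem.
  move=> a b e; move/negP: hxS; apply; rewrite e.
  by rewrite memvD ?memvZ ?memv_span ?inE ?eqxx ?orbT.
Qed.

Lemma step0 (F : closedFieldType) (h2 : 2 = 0 :> F) (B : Oct F -> Prop) : Alg B ->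
  exists2 p : Oct F, B p & p != 0 /\ nul p.
Proof.
move=> hA; case: (hA) => hl hm ht hd.
have [q hq hn] := hd (oone F) 0.
have e7 : cf q 7 = - cf q 0.
  by apply/eqP; rewrite -addr_eq0 addrC -otrE ht.
set mu := cf q 0 * cf q 0 + (cf q 1 * cf q 4 + cf q 2 * cf q 5 + cf q 3 * cf q 6).
have [l hlam] := @solve_monicpoly F 2 (fun i => if i == 0%N then mu else 0) isT.
move: hlam; rewrite !big_ord_recr big_ord0 /= add0r mul0r addr0 expr0 mulr1 => hlam.
have hB1 : B (l *: oone F).
  case: (eqVneq l 0) => [->|hl0]; first by rewrite scale0r; exact: Alg0.
  have e : omul q q = mu *: oone F.
    by oeq2; rewrite ?e7 /mu; ring.
  apply: AlgZ => //.
  have hmu : mu != 0 by rewrite -hlam expf_neq0.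
  have -> : oone F = mu^-1 *: omul q q by rewrite e scalerA mulVf ?scale1r.
  by apply: AlgZ => //; apply: (hm).
exists (q + (-1) *: (l *: oone F)).
  by rewrite addrC; apply: (hl).
split.
- apply/eqP => e; apply: (hn l 0).
  by rewrite scale0r addr0; apply/eqP; rewrite -subr_eq0 -scaleN1r; apply/eqP.
- split.
  + oeq2; rewrite ?cf0 ?e7; rewrite ?(opp2 h2); move: hlam; rewrite /mu => hlam; ring: h2 hlam.
  + rewrite otrE !cfDD !cfZ ooneE !cf_mk8 //= e7 ?(opp2 h2); ring: h2.
Qed.

Theorem lemma6p9 (F : closedFieldType) (hchar : 2%N \in [pchar F])
  (A : {vspace Oct F})
  (hsub : is_subalgebra A)
  (htr : forall a, a \in A -> otr a = 0)
  (hdim : (3 <= \dim A)%N) :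
  exists g : Oct F -> Oct F, isG2 g /\
    ((in_image g A (oone F) /\ in_image g A (ouvec F 0)
        /\ in_image g A (ovvec F 1))
     \/
     (in_image g A (ouvec F 0) /\ in_image g A (ovvec F 1)
        /\ in_image g A (ovvec F 2) /\ ~ in_image g A (oone F))).
Proof.
have h2 : 2 = 0 :> F := pcharf0 hchar.
set B := fun x => x \in A.
have hA : Alg B := Alg_vspace hsub htr hdim.
have [p hp [hp0 hpn]] := step0 h2 hA.
have [g1 hg1 [l hl e1]] := L1 hp0 hpn.
have hA1 := Alg_img hg1 hA.
have hu1 : img g1 B (u1v F) := img_scale hg1 hA hp e1 hl.
have [g2 hg2 [hu2 hv2]] := L2 h2 hA1 hu1.
have hA2 := Alg_img hg2 hA1.
have k2 : forall x, img g2 (img g1 B) x -> in_image (g2 \o g1) A x.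
  by move=> x /img_comp.
rewrite ouvec0E ovvec1E ovvec2E.
case: (boolP (oone F \in A)) => h1.
- exists (g2 \o g1); split; first by case: (good_comp hg2 hg1).
  left; split; last by split; apply: k2.
  by apply: k2; apply/(img_one _ hg2)/(img_one _ hg1).
- have hn1 : ~ img g2 (img g1 B) (oone F).
    by move/(img_one _ hg2)/(img_one _ hg1); apply/negP.
  have [g3 hg3 [h3u h3v h3w]] := L3 hA2 hu2 hv2 hn1.
  have k3 : forall x, img g3 (img g2 (img g1 B)) x -> in_image (g3 \o (g2 \o g1)) A x.
    by move=> x /img_comp /img_comp.
  exists (g3 \o (g2 \o g1)); split; first by case: (good_comp hg3 (good_comp hg2 hg1)).
  right; split; first exact: k3.
  split; first exact: k3.
  split; first exact: k3.
  move=> h; apply: hn1; apply/(img_one _ hg3).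
  by case: h => y hy ey; exists (g2 (g1 y)) => //; exists (g1 y) => //; exists y.
Qed.
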